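(* Let $D$ be a delta-matroid on $[n,\overline{n}]$. Then $$U_D(u,v-1)=\sum_{I\text{ independent in }D}u^{n-|I|}v^{a(I)}.$$
   Context: For a finite $E\subseteq\{1,2,3,\dots\}$ let $E\cup\overline{E}$ consist of $E$ and formal copies $\overline{i}$ ($i\in E$), with involution $a\mapsto\overline{a}$; $\overline{S}=\{\overline{a}:a\in S\}$; $[n,\overline{n}]$ denotes this for $E=[n]$. A subset is admissible if it contains at most one of $i,\overline{i}$ for each $i$; $\operatorname{AdS}_n$ is the set of admissible subsets of $[n,\overline{n}]$. In $\mathbb{R}^E$ set $e_{\overline{i}}=-e_i$, $e_S=\sum_{a\in S}e_a$. A delta-matroid on $E\cup\overline{E}$ is a nonempty collection $\mathcal{F}$ of admissible sets of size $|E|$ (feasible sets) such that $\operatorname{Conv}\{e_B:B\in\mathcal{F}\}$ has all edges parallel to some $e_i$ or $e_i\pm e_j$. Rank function: $g_D(S)=\max_{B\in\mathcal{F}}(|S\cap B|-|\overline{S}\cap B|)$. $U_D(u,v)=\sum_{S\in\operatorname{AdS}_n}u^{n-|S|}v^{(|S|-g_D(S))/2}$. An admissible $S$ is independent in $D$ if $g_D(S)=|S|$, equivalently if $S$ is contained in a feasible set. For $A\subseteq[n]$, the projection $D(A)$ is the delta-matroid on $([n]\setminus A)\cup\overline{([n]\setminus A)}$ with feasible sets $B\setminus(A\cup\overline{A})$, $B\in\mathcal{F}$. For $S$ admissible, $\underline{S}\subseteq[n]$ is its unsigned version (image under identifying $i$ with $\overline{i}$). Order $[n]$ by $1<2<\dots<n$.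 For a delta-matroid $D'$ on $E\cup\overline{E}$ and a feasible set $B$ of $D'$: $i\in E$ is $B$-orientable if $B\,\Delta\,\{i,\overline{i}\}$ is not feasible in $D'$; $i$ is $B$-active if it is $B$-orientable and there is no $j\in E$ with $j<i$ such that $B\,\Delta\,\{i,j,\overline{i},\overline{j}\}$ is feasible in $D'$. For $I$ independent in $D$, $I$ is a feasible set of $D([n]\setminus\underline{I})$, and $i\in\underline{I}$ is called $I$-active if $i$ is $I$-active in $D([n]\setminus\underline{I})$; $a(I)$ is the number of $I$-active elements of $\underline{I}$. *)

(* Defs.v *)
From HB Require Import structures.
From mathcomp Require Import all_boot all_order all_algebra.
From Stdlib Require Import Rdefinitions.
From mathcomp Require Import Rstruct.
Set Implicit Arguments. Unset Strict Implicit. Unset Printing Implicit Defensive.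
Import Order.TTheory GRing.Theory Num.Theory.
Local Open Scope ring_scope.

(* The ground set [n] = {1,..,n} is modelled by 'I_n (i : 'I_n stands for i+1,
   so the order 1<2<..<n is the order of 'I_n).  The signed element (i, true)
   stands for i and (i, false) for its formal copy \bar i. *)
Definition signed (n : nat) := ('I_n * bool)%type.

Definition sbar {n} (a : signed n) : signed n := (a.1, ~~ a.2).

Definition setbar {n} (S : {set signed n}) : {set signed n} := [set sbar a | a in S].

Definition admissible {n} (S : {set signed n}) : bool :=
  [forall i : 'I_n, ~~ (((i, true) \in S) && ((i, false) \in S))].

Definition under {n} (S : {set signed n}) : {set 'I_n} := [set a.1 | a in S].

Definition symd {T : finType} (A B : {set T}) : {set T} := (A :\: B) :|: (B :\: A).

Definition pairset {n} (i : 'I_n) : {set signed n} := [set (i, true); (i, false)].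

Definition evec {n} (S : {set signed n}) (i : 'I_n) : R :=
  ((i, true) \in S)%:R - ((i, false) \in S)%:R.

Definition dotR {n} (w : 'I_n -> R) (S : {set signed n}) : R :=
  \sum_(i < n) w i * evec S i.

(* [B1, B2] (B1 <> B2) is an edge of Conv{e_B : B in F}: some linear functional w
   attains its maximum over the polytope exactly on the segment [e_B1, e_B2], i.e. the
   feasible sets whose points maximise w are exactly B1 and B2 (all e_B are
   distinct vertices of the cube [-1,1]^n, no three of them collinear). *)
Definition is_edge {n} (F : {set {set signed n}}) (B1 B2 : {set signed n}) : Prop :=
  [/\ B1 \in F, B2 \in F, B1 != B2 &
   exists w : 'I_n -> R, forall C, C \in F ->
     ((forall C', C' \in F -> dotR w C' <= dotR w C) <-> (C = B1 \/ C = B2))].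

Definition parallel_ok {n} (v : 'I_n -> R) : Prop :=
  exists i : 'I_n, exists c : R,
    (forall k, v k = c * (k == i)%:R) \/
    exists j : 'I_n, j != i /\
      ((forall k, v k = c * ((k == i)%:R + (k == j)%:R)) \/
       (forall k, v k = c * ((k == i)%:R - (k == j)%:R))).

Definition is_delta_matroid {n} (F : {set {set signed n}}) : Prop :=
  [/\ F != set0,
      (forall B, B \in F -> admissible B /\ #|B| = n) &
      (forall B1 B2, is_edge F B1 B2 -> parallel_ok (fun i => evec B1 i - evec B2 i))].

(* rank function g_D(S) = max_{B in F} (|S cap B| - |\bar S cap B|).  The seed
   -|S| of the max is a lower bound of every term, hence harmless since F <> set0. *)
Definition rankD {n} (F : {set {set signed n}}) (S : {set signed n}) : int :=
  \big[Num.max/ - (#|S|%:Z)]_(B in F) (#|S :&: B|%:Z - #|setbar S :&: B|%:Z).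

Definition U_D {n} (F : {set {set signed n}}) (Rg : comNzRingType) (u v : Rg) : Rg :=
  \sum_(S : {set signed n} | admissible S)
     u ^+ (n - #|S|) * v ^+ (divn (absz (#|S|%:Z - rankD F S)) 2).

Definition independent {n} (F : {set {set signed n}}) (S : {set signed n}) : bool :=
  admissible S && (rankD F S == #|S|%:Z).

Definition proj_feas {n} (F : {set {set signed n}}) (A : {set 'I_n}) : {set {set signed n}} :=
  [set B :\: [set a | a.1 \in A] | B in F].

Definition orientable {n} (F' : {set {set signed n}}) (B : {set signed n}) (i : 'I_n) : bool :=
  symd B (pairset i) \notin F'.

Definition active {n} (F' : {set {set signed n}}) (E : {set 'I_n}) (B : {set signed n})
    (i : 'I_n) : bool :=
  orientable F' B i &&
  [forall j : 'I_n, ((j \in E) && ltn j i) ==> (symd B (pairset i :|: pairset j) \notin F')].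

Definition activity {n} (F : {set {set signed n}}) (I : {set signed n}) : nat :=
  #|[set i in under I | active (proj_feas F (~: under I)) (under I) I i]|.

(* Main.v *)
Require Import Defs.
From HB Require Import structures.
From mathcomp Require Import all_boot all_order all_algebra.
From Stdlib Require Import Rdefinitions.
From mathcomp Require Import Rstruct.
From mathcomp Require Import zify ring lra.
Set Implicit Arguments. Unset Strict Implicit. Unset Printing Implicit Defensive.
Import Order.TTheory GRing.Theory Num.Theory.

Section Basics.
Variable n : nat.
Implicit Types (X Y S B C : {set signed n}).

Definition tr X := forall i : 'I_n, ((i,false) \in X) = ~~ ((i,true) \in X).

Lemma cardX X : #|X| = (\sum_(i < n) (((i,true) \in X) + ((i,false) \in X)))%N.
Proof.
rewrite -sum1_card (big_mkcond) /=.
rewrite (eq_bigr (fun p : signed n => (fun i b => if (i,b) \in X then 1 else 0) p.1 p.2)%N); last by case.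
rewrite -(pair_big xpredT xpredT (fun i b => if (i,b) \in X then 1 else 0))%N /=.
apply: eq_bigr => i _; rewrite big_bool /=.
by case: ((i,true) \in X); case: ((i,false) \in X).
Qed.
Lemma admP X : reflect (forall i : 'I_n, ~~ (((i,true) \in X) && ((i,false) \in X))) (admissible X).
Proof. exact: forallP. Qed.

Lemma sum_le1_eq (a : 'I_n -> nat) : (forall i, a i <= 1)%N -> (\sum_i a i)%N = n -> forall i, a i = 1%N.
Proof.
move=> le1 sn k; have := le1 k; rewrite leq_eqVlt ltnS leqn0 => /orP[/eqP //|/eqP ak0].
exfalso; move: sn; rewrite (bigD1 k) //= ak0 add0n => h.
have : (\sum_(i | i != k) a i <= \sum_(i | i != k) 1)%N by apply: leq_sum.
rewrite sum1_card cardC1 card_ord h; move: (ltn_ord k); lia.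
Qed.

Lemma trP B : admissible B -> #|B| = n -> tr B.
Proof.
move=> /admP adm cB.
have le1 : forall j : 'I_n, (((j,true) \in B) + ((j,false) \in B) <= 1)%N.
  by move=> j; have := adm j; case: ((j,true) \in B); case: ((j,false) \in B).
have all1 := sum_le1_eq le1 (etrans (esym (cardX B)) cB).
move=> i; have := all1 i; have := adm i.
by case: ((i,true) \in B); case: ((i,false) \in B).
Qed.

Local Open Scope ring_scope.
Definition ev X (i : 'I_n) : int := (((i,true) \in X) : nat)%:Z - (((i,false) \in X) : nat)%:Z.
Definition Lw (w : 'I_n -> int) X : int := \sum_i w i * ev X i.
Lemma ev_tr B i : tr B -> ev B i = if (i,true) \in B then 1 else -1 : int.
Proof. by move=> t; rewrite /ev t; case: ((i,true) \in B). Qed.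

Lemma tr_ext B C : tr B -> tr C -> (forall i, ((i,true) \in B) = ((i,true) \in C)) -> B = C.
Proof. by move=> tB tC h; apply/setP; case=> i []; rewrite ?tB ?tC h. Qed.

Lemma sbarK : involutive (@sbar n).
Proof. by case=> i b; rewrite /sbar /= negbK. Qed.

Lemma in_setbar S a : (a \in setbar S) = (sbar a \in S).
Proof. by rewrite /setbar (can2_imset_pre _ sbarK sbarK) inE. Qed.

Lemma natz_sum (I : finType) (P : pred I) (f : I -> nat) : ((\sum_(i | P i) f i)%N)%:Z = \sum_(i | P i) (f i)%:Z.
Proof. by rewrite (big_morph Posz PoszD (erefl _)). Qed.

Lemma rank_term S B : (#|S :&: B|%:Z - #|setbar S :&: B|%:Z) = Lw (ev S) B.
Proof.
rewrite !cardX !natz_sum -sumrB /Lw; apply: eq_bigr => i _.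
rewrite !inE !in_setbar /sbar /= /ev.
by case: ((i,true) \in S); case: ((i,false) \in S); case: ((i,true) \in B); case: ((i,false) \in B).
Qed.

Lemma rankE (F : {set {set signed n}}) S : rankD F S = \big[Num.max/ (- (#|S|%:Z))]_(B in F) Lw (ev S) B.
Proof. by rewrite /rankD; apply: eq_bigr => B _; rewrite rank_term. Qed.
End Basics.
Local Open Scope ring_scope.
Lemma ex_max (T : finType) d (O : orderType d) (P : pred T) (f : T -> O) x0 : P x0 -> exists2 x, P x & forall y, P y -> (f y <= f x)%O.
Proof. by move=> Px0; case: (arg_maxP f Px0) => x Px h; exists x. Qed.
Lemma ex_min (T : finType) d (O : orderType d) (P : pred T) (f : T -> O) x0 : P x0 -> exists2 x, P x & forall y, P y -> (f x <= f y)%O.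
Proof. by move=> Px0; case: (arg_minP f Px0) => x Px h; exists x. Qed.

Lemma in_symd (T : finType) (X Y : {set T}) a : (a \in symd X Y) = ((a \in X) != (a \in Y)).
Proof. by rewrite /symd !inE; case: (a \in X); case: (a \in Y). Qed.

Section Lin.
Variable n : nat.
Implicit Types (X Y S B C : {set signed n}).

Lemma in_pairset k (a : signed n) : (a \in pairset k) = (a.1 == k).
Proof. by case: a => i []; rewrite !inE !xpair_eqE /= ?andbT ?andbF ?orbF. Qed.

Lemma ev_R X i : evec X i = (ev X i)%:~R.
Proof. by rewrite /evec /ev rmorphB. Qed.

Lemma dotR_int (W : 'I_n -> int) X : dotR (fun k => (W k)%:~R) X = (Lw W X)%:~R.
Proof. by rewrite /dotR /Lw rmorph_sum; apply: eq_bigr => k _; rewrite rmorphM /= ev_R. Qed.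

Lemma Lw_add (a b : 'I_n -> int) X : Lw (fun k => a k + b k) X = Lw a X + Lw b X.
Proof. by rewrite /Lw -big_split; apply: eq_bigr => k _; rewrite mulrDl. Qed.

Lemma Lw_scale (c : int) (a : 'I_n -> int) X : Lw (fun k => c * a k) X = c * Lw a X.
Proof. by rewrite /Lw mulr_sumr; apply: eq_bigr => k _; rewrite mulrA. Qed.

Lemma sum_plus1 (a : 'I_n -> int) : \sum_k (a k + 1) = \sum_k a k + n%:Z.
Proof. by rewrite big_split /= sumr_const card_ord natz. Qed.

Definition dd B y := \sum_k (1 - ev B k * ev y k).

Lemma ddE B y : dd B y = n%:Z - Lw (ev B) y.
Proof. by rewrite /dd sumrB sumr_const card_ord natz /Lw. Qed.

Lemma LwBB B : tr B -> Lw (ev B) B = n%:Z.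
Proof.
move=> tB; rewrite /Lw (eq_bigr (fun _ => 1)) ?sumr_const ?card_ord ?natz //.
by move=> k _; rewrite ev_tr //; case: ((k,true) \in B).
Qed.

Lemma ev_eq X Y : tr X -> tr Y -> (forall k, ev X k = ev Y k) -> X = Y.
Proof.
move=> tX tY h; apply: tr_ext => // k; have := h k; rewrite !ev_tr //.
by case: ((k,true) \in X); case: ((k,true) \in Y).
Qed.
End Lin.
Section LP.
Variable n : nat.
Variable F : {set {set signed n}}.
Hypothesis hD : is_delta_matroid F.
Implicit Types (X Y S B C : {set signed n}).

Lemma hF B : B \in F -> tr B.
Proof. by case: hD => _ h _ /h [a c]; apply: trP. Qed.

Lemma edge_of B C (w : 'I_n -> int) : B \in F -> C \in F -> C != B ->
  (forall y, y \in F -> (Lw w y - Lw w B) * dd B C <= (Lw w C - Lw w B) * dd B y) ->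
  (forall y, y \in F -> y != B -> (Lw w y - Lw w B) * dd B C = (Lw w C - Lw w B) * dd B y -> dd B C <= dd B y) ->
  is_edge F B C.
Proof.
move=> BF CF CB cross eqc.
have tB := hF BF; have tC := hF CF.
pose gs := Lw w C - Lw w B; pose ds := dd B C.
pose sg k := if ev B k == ev C k then ev B k else 0.
pose K : int := (2 * n + 1)%N%:Z.
pose Q y := ds * Lw w y + gs * Lw (ev B) y.
pose Wi k := K * (ds * w k + gs * ev B k) + sg k.
have LWi y : Lw Wi y = K * Q y + Lw sg y.
  by rewrite /Wi Lw_add Lw_scale Lw_add !Lw_scale.
have Qd y : Q y - Q B = (Lw w y - Lw w B) * ds - gs * dd B y.
  by rewrite /Q ddE LwBB //; ring.
have Qle y : y \in F -> Q y <= Q B.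
  by move=> yF; rewrite -subr_le0 Qd subr_le0; exact: cross.
have QC : Q C = Q B.
  by apply/eqP; rewrite -subr_eq0 Qd /ds /gs; apply/eqP; ring.
have sle y : tr y -> Lw sg y <= Lw sg B.
  move=> ty; rewrite /Lw; apply: ler_sum => k _; rewrite /sg !ev_tr //.
  by case: ((k,true) \in B); case: ((k,true) \in C); case: ((k,true) \in y).
have sge y : tr y -> - n%:Z <= Lw sg y.
  move=> ty; rewrite -subr_ge0 opprK /Lw -sum_plus1; apply: sumr_ge0 => k _.
  rewrite /sg !ev_tr //.
  by case: ((k,true) \in B); case: ((k,true) \in C); case: ((k,true) \in y).
have sC : Lw sg C = Lw sg B.
  rewrite /Lw; apply: eq_bigr => k _; rewrite /sg !ev_tr //.
  by case: ((k,true) \in B); case: ((k,true) \in C).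
have seq y : tr y -> Lw sg y = Lw sg B -> forall k, ev B k == ev C k -> ev y k = ev B k.
  move=> ty e.
  have nn : forall k, true -> 0 <= sg k * ev B k - sg k * ev y k.
    move=> k _; rewrite /sg !ev_tr //.
    by case: ((k,true) \in B); case: ((k,true) \in C); case: ((k,true) \in y).
  have s0 : \sum_(k | true) (sg k * ev B k - sg k * ev y k) = 0.
    by rewrite sumrB -/(Lw sg B) -/(Lw sg y) e subrr.
  have h0 := psumr_eq0P nn s0.
  move=> k agr; have := h0 k isT; rewrite /sg agr; move: agr; rewrite !ev_tr //.
  by case: ((k,true) \in B); case: ((k,true) \in C); case: ((k,true) \in y).
have ddle y : tr y -> (forall k, ev B k == ev C k -> ev y k = ev B k) -> ds <= dd B y -> y = C.
  move=> ty hy le; apply: ev_eq => // k.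
  have nn : forall k, true -> 0 <= (1 - ev B k * ev C k) - (1 - ev B k * ev y k).
    move=> j _; case: (boolP (ev B j == ev C j)) => [/[dup] a /hy ->|].
      by rewrite (eqP a) subrr.
    rewrite !ev_tr //.
    by case: ((j,true) \in B); case: ((j,true) \in C); case: ((j,true) \in y).
  have s0 : \sum_(k | true) ((1 - ev B k * ev C k) - (1 - ev B k * ev y k)) = 0.
    apply/eqP; rewrite eq_le sumr_ge0 // andbT sumrB -/(dd B C) -/(dd B y) subr_le0; exact: le.
  have h0 := psumr_eq0P nn s0.
  case: (boolP (ev B k == ev C k)) => [/[dup] a /hy -> |]; first exact/eqP.
  have := h0 k isT; rewrite !ev_tr //.
  by case: ((k,true) \in B); case: ((k,true) \in C); case: ((k,true) \in y).
have dE y : dotR (fun k => (Wi k)%:~R) y = (Lw Wi y)%:~R := dotR_int Wi y.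
have K0 : 0 <= K by [].
split => //; first by rewrite eq_sym.
exists (fun k => (Wi k)%:~R) => C' C'F; split.
- move=> hmax; have := hmax B BF; rewrite !dE ler_int !LWi => hB.
  have tC' := hF C'F.
  have q1 := Qle C' C'F.
  have s1 := sge C' tC'; have s2 := sle C' tC'; have s3 := sge B tB.
  case: (ltrP (Q C') (Q B)) => [lt|ge].
    exfalso.
    have : K * (Q C' + 1) <= K * Q B by apply: ler_wpM2l => //; rewrite lezD1.
    rewrite mulrDr mulr1 => hh.
    move: hB hh s1 s2 s3; rewrite /K; lia.
  have qe : Q C' = Q B by apply/eqP; rewrite eq_le q1 ge.
  have se : Lw sg C' = Lw sg B.
    by apply/eqP; rewrite eq_le s2 /=; move: hB; rewrite qe lerD2l.
  case: (eqVneq C' B) => [->|nB]; first by left.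
  right; apply: ddle => //; first exact: seq.
  apply: eqc => //; apply/eqP; rewrite -subr_eq0; apply/eqP.
  by rewrite -[_ * dd B C]/(_ * ds) -[Lw w C - Lw w B]/gs -Qd qe subrr.
- move=> hC y yF; rewrite !dE ler_int !LWi.
  have ty := hF yF.
  case: hC => ->; last rewrite QC sC.
    by apply: lerD; [apply: ler_wpM2l => //; exact: Qle| exact: sle].
  by apply: lerD; [apply: ler_wpM2l => //; exact: Qle| exact: sle].
Qed.
End LP.
Lemma ratio_le (a b c d : int) : 0 < b -> 0 < d ->
  ((a%:~R / b%:~R : rat) <= c%:~R / d%:~R) = (a * d <= c * b).
Proof.
move=> b0 d0; rewrite ler_pdivrMr ?ltr0z // mulrAC ler_pdivlMr ?ltr0z //.
by rewrite -!rmorphM /= ler_int.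
Qed.

Lemma ratio_eq (a b c d : int) : 0 < b -> 0 < d ->
  ((a%:~R / b%:~R : rat) == c%:~R / d%:~R) = (a * d == c * b).
Proof.
move=> b0 d0; rewrite eqr_div ?intr_eq0 -?lt0r ?b0 ?d0 ?orbT //.
  by rewrite -!rmorphM /= eqr_int.
by rewrite gt_eqF.
by rewrite gt_eqF.
Qed.

Section LP2.
Variable n : nat.
Variable F : {set {set signed n}}.
Hypothesis hD : is_delta_matroid F.
Implicit Types (X Y S B C : {set signed n}).

Lemma ddpos B y : tr B -> tr y -> y != B -> 0 < dd B y.
Proof.
move=> tB ty yB; case: (pickP (fun k => ev y k != ev B k)) => [k hk|none]; last first.
  by move: yB; rewrite (@ev_eq _ y B) ?eqxx // => k; apply/eqP; have := none k; move/negbFE.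
have t1 : 0 < 1 - ev B k * ev y k.
  by move: hk; rewrite !ev_tr //; case: ((k,true) \in B); case: ((k,true) \in y).
have t2 : 0 <= \sum_(i | i != k) (1 - ev B i * ev y i).
  apply: sumr_ge0 => i _; rewrite !ev_tr //.
  by case: ((i,true) \in B); case: ((i,true) \in y).
by rewrite /dd (bigD1 k) //=; apply: (lt_le_trans t1); rewrite lerDl.
Qed.

Lemma ddBB B : tr B -> dd B B = 0.
Proof. by move=> tB; rewrite ddE LwBB // subrr. Qed.

Lemma choose_C B (w : 'I_n -> int) : B \in F -> (exists2 C0, C0 \in F & Lw w B < Lw w C0) ->
  exists C, [/\ C \in F, C != B, Lw w B < Lw w C,
  (forall y, y \in F -> (Lw w y - Lw w B) * dd B C <= (Lw w C - Lw w B) * dd B y) &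
  (forall y, y \in F -> y != B -> (Lw w y - Lw w B) * dd B C = (Lw w C - Lw w B) * dd B y -> dd B C <= dd B y)].
Proof.
move=> BF [C0 C0F lt0].
have tB := hF hD BF.
pose P := [pred y | (y \in F) && (y != B)].
have PC0 : P C0 by rewrite /= C0F /=; apply: contraTneq lt0 => ->; rewrite ltxx.
pose ratio y : rat := (Lw w y - Lw w B)%:~R / (dd B y)%:~R.
have [C1 PC1 maxC1] := ex_max ratio PC0.
pose T := [pred y | P y && (ratio y == ratio C1)].
have TC1 : T C1 by apply/andP; split; [exact: PC1 | exact: eqxx].
have [C TC minC] := ex_min (fun y => dd B y) TC1.
move: TC => /andP [/andP [CF CB] /eqP rC].
have dpos y : P y -> 0 < dd B y.
  move=> /andP [yF yB]; apply: ddpos => //. exact: (hF hD yF).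
have r0 : 0 < ratio C0.
  by apply: divr_gt0; rewrite ltr0z ?subr_gt0 // dpos.
have gpos : 0 < Lw w C - Lw w B.
  have : 0 < ratio C by rewrite rC; exact: lt_le_trans r0 (maxC1 _ PC0).
  rewrite /ratio; move: (dpos C (introT andP (conj CF CB))) => dC.
  rewrite pmulr_lgt0 ?invr_gt0 ?ltr0z // .
have PC : P C by rewrite /= CF CB.
exists C; split => //; first by rewrite -subr_gt0.
- move=> y yF; case: (eqVneq y B) => [->|yB].
    by rewrite subrr mul0r ddBB // mulr0.
  have Py : P y by rewrite /= yF yB.
  rewrite -ratio_le ?dpos //; rewrite -/(ratio y) -/(ratio C) rC; exact: maxC1.
- move=> y yF yB e; have Py : P y by rewrite /= yF yB.
  apply: (minC y); apply/andP; split; first exact: Py.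
  rewrite -rC /ratio ratio_eq ?dpos //; exact/eqP.
Qed.
End LP2.
Lemma memb_ev n (B C : {set signed n}) k b : tr B -> tr C ->
  ((k,b) \in C) = (((k,b) \in B) != (ev B k != ev C k)).
Proof.
move=> tB tC; rewrite !ev_tr //; case: b; rewrite ?tB ?tC;
by case: ((k,true) \in B); case: ((k,true) \in C).
Qed.

Section LP3.
Variable n : nat.
Variable F : {set {set signed n}}.
Hypothesis hD : is_delta_matroid F.
Implicit Types (X Y S B C : {set signed n}).

Lemma LP B (w : 'I_n -> int) : B \in F -> (exists2 C0, C0 \in F & Lw w B < Lw w C0) ->
  exists k l, symd B (pairset k :|: pairset l) \in F /\ Lw w B < Lw w (symd B (pairset k :|: pairset l)).
Proof.
move=> BF ex; have [C [CF CB lt cross eqc]] := choose_C hD BF ex.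
have edge := edge_of hD BF CF CB cross eqc.
have tB := hF hD BF; have tC := hF hD CF.
case: hD => _ _ /(_ B C edge) [i [c hv]].
have hz : exists j, forall k, k != i -> k != j -> ev B k = ev C k.
  have cv : forall k, evec B k - evec C k = 0 -> ev B k = ev C k.
    by move=> k; rewrite !ev_R -rmorphB /= => /eqP; rewrite intr_eq0 subr_eq0 => /eqP.
  case: hv => [h1|[j [ji [h2|h2]]]].
  - by exists i => k ki _; apply: cv; have := h1 k => /= ->; rewrite (negbTE ki) mulr0.
  - by exists j => k ki kj; apply: cv; have := h2 k => /= ->; rewrite (negbTE ki) (negbTE kj) addr0 mulr0.
  - by exists j => k ki kj; apply: cv; have := h2 k => /= ->; rewrite (negbTE ki) (negbTE kj) subr0 mulr0.
case: hz => j hz.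
have key : exists k1 l1, forall k, ((k == k1) || (k == l1)) = (ev B k != ev C k).
  case: (boolP (ev B i != ev C i)) => bi; case: (boolP (ev B j != ev C j)) => bj.
  - exists i, j => k; case: (eqVneq k i) => [->|ki]; first by rewrite bi.
    case: (eqVneq k j) => [->|kj]; first by rewrite orbT bj.
    by rewrite hz // eqxx.
  - exists i, i => k; case: (eqVneq k i) => [->|ki]; first by rewrite bi.
    case: (eqVneq k j) => [->|kj]; first by rewrite (negbTE bj).
    by rewrite hz // eqxx.
  - exists j, j => k; case: (eqVneq k j) => [->|kj]; first by rewrite bj.
    case: (eqVneq k i) => [->|ki]; first by rewrite (negbTE bi).
    by rewrite hz // eqxx.
  - exfalso; move/negP: CB; apply; apply/eqP; apply: ev_eq => // k.
    case: (eqVneq k i) => [->|ki]; first by apply/esym/eqP; exact: negbNE.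
    case: (eqVneq k j) => [->|kj]; first by apply/esym/eqP; exact: negbNE.
    by rewrite hz.
case: key => k1 [l1 key].
have Ceq : C = symd B (pairset k1 :|: pairset l1).
  apply/setP => -[k b]; rewrite in_symd inE !in_pairset /= key.
  exact: memb_ev.
by exists k1, l1; rewrite -Ceq.
Qed.
End LP3.
Local Open Scope ring_scope.
Lemma bin_bound m (d : 'I_m -> int) : (forall k, -2 <= d k <= 2) ->
  - (Posz (expn 2 m.+1) - 2) <= \sum_(k < m) Posz (expn 2 k) * d k <= Posz (expn 2 m.+1) - 2.
Proof.
elim: m d => [|m IH] d hd; first by rewrite big_ord0 expn1.
rewrite big_ord_recr /=.
have := IH (fun k => d (widen_ord (leqnSn m) k)) (fun k => hd _).
have := hd ord_max.
have : (0 <= Posz (expn 2 m)) by [].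
rewrite !expnS !PoszM.
move: (Posz (expn 2 m)) (d ord_max) (\sum_(i < m) _) => P dm s.
move=> P0 /andP [h1 h2] /andP [h3 h4]; apply/andP; split; nia.
Qed.

Lemma bin0 m (d : 'I_m -> int) : (forall k, d k = 0 \/ d k = 2 \/ d k = -2) ->
  \sum_(k < m) Posz (expn 2 k) * d k = 0 -> forall k, d k = 0.
Proof.
elim: m d => [|m IH] d hd; first by move=> _ [].
rewrite big_ord_recr /= => s0.
have hb := bin_bound (d := fun k => d (widen_ord (leqnSn m) k)) (fun k => _).
have hb' : forall k : 'I_m, -2 <= d (widen_ord (leqnSn m) k) <= 2.
  by move=> k; case: (hd (widen_ord (leqnSn m) k)) => [->|[->|->]].
have {hb} hbnd := hb hb'.
have dm0 : d ord_max = 0.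
  move: hbnd s0 (hd ord_max); have : (0 < Posz (expn 2 m)) by rewrite ltz_nat expn_gt0.
  rewrite !expnS !PoszM.
  move: (Posz (expn 2 m)) (d ord_max) (\sum_(i < m) _) => P dm s.
  move=> P0 /andP [h1 h2] s0 h; case: h => [//|[e|e]]; rewrite e in s0; nia.
rewrite dm0 mulr0 addr0 in s0.
have IH' := IH _ (fun k => hd _) s0.
move=> k; case: (ltnP k m) => [lt|ge].
  by have := IH' (Ordinal lt); congr (d _ = _); apply: val_inj.
by rewrite -dm0; congr (d _); apply: val_inj => /=; move: (ltn_ord k) ge; lia.
Qed.
Section Main.
Variable n : nat.
Variable F : {set {set signed n}}.
Hypothesis hD : is_delta_matroid F.
Implicit Types (X Y S B C I : {set signed n}) (E K : {set 'I_n}).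

Definition restr E X : {set signed n} := X :\: [set a | a.1 \in ~: E].
Definition flp K : {set signed n} := [set a | a.1 \in K].

Lemma in_restr E X a : (a \in restr E X) = (a.1 \in E) && (a \in X).
Proof. by rewrite /restr !inE negbK. Qed.

Lemma in_flp K a : (a \in flp K) = (a.1 \in K).
Proof. by rewrite inE. Qed.

Lemma in_under X k : (k \in under X) = ((k,true) \in X) || ((k,false) \in X).
Proof.
apply/imsetP/idP => [[[i b] ab /= ->]|]; first by case: b ab => ->; rewrite ?orbT.
by case/orP => h; [exists (k,true) | exists (k,false)].
Qed.

Lemma ev_out X k : k \notin under X -> ev X k = 0.
Proof. by rewrite in_under negb_or /ev => /andP [/negbTE -> /negbTE ->]. Qed.

Lemma sign_in S B k : admissible S -> tr B -> k \in under S ->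
  (ev S k * ev B k = 1) \/ (ev S k * ev B k = -1).
Proof.
move=> /admP aS tB; rewrite in_under [ev B k]ev_tr // /ev; have := aS k.
by case: ((k,true) \in S); case: ((k,false) \in S); case: ((k,true) \in B) => //= _ _; (by left) || (by right).
Qed.

Lemma ev_symd B K m : tr B -> ev (symd B (flp K)) m = if m \in K then - ev B m else ev B m.
Proof.
move=> tB; rewrite /ev !in_symd !in_flp /= tB.
by case: (m \in K); case: ((m,true) \in B).
Qed.

Lemma Lw_flip (w : 'I_n -> int) B K : tr B ->
  Lw w (symd B (flp K)) = Lw w B - 2 * \sum_(m in K) w m * ev B m.
Proof.
move=> tB; rewrite /Lw [\sum_(m in K) _]big_mkcond /= mulr_sumr -sumrB; apply: eq_bigr => m _.
rewrite ev_symd //; case: (m \in K); rewrite ?mulr0 ?subr0 //; ring.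
Qed.

Lemma pairset2 k l : pairset k :|: pairset l = flp [set k; l].
Proof. by apply/setP => a; rewrite in_setU !in_pairset in_flp !inE. Qed.

Lemma pairset1 k : pairset k = flp [set k].
Proof. by apply/setP => a; rewrite in_pairset in_flp !inE. Qed.

Lemma restr_flip E B K : restr E (symd B (flp K)) = symd (restr E B) (flp [set m in K | m \in E]).
Proof.
apply/setP => -[m b]; rewrite in_restr !in_symd in_restr !in_flp !inE /=.
by case: (m \in E); case: (m \in K).
Qed.

Lemma restr_in_proj E C : C \in F -> restr E C \in proj_feas F (~: E).
Proof. by move=> CF; apply: imset_f. Qed.
Lemma sum2 (f : 'I_n -> int) k l : \sum_(m in [set k; l]) f m = if k == l then f k else f k + f l.
Proof.
case: eqVneq => [<-|kl]; first by rewrite setUid big_set1.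
by rewrite big_setU1 /= ?big_set1 // inE.
Qed.

Lemma filt_k1 E k l : k \in E -> l \notin E -> [set m in [set k; l] | m \in E] = [set k].
Proof.
move=> kE lE; apply/setP => m; rewrite !inE.
case: (eqVneq m k) => [->|mk] /=; first by rewrite kE.
by case: (eqVneq m l) => [->|ml] //=; rewrite (negbTE lE).
Qed.

Lemma filt_kk E k : k \in E -> [set m in [set k; k] | m \in E] = [set k].
Proof. by move=> kE; apply/setP => m; rewrite !inE orbb; case: (eqVneq m k) => [->|]. Qed.

Lemma filt_l1 E k l : k \notin E -> l \in E -> [set m in [set k; l] | m \in E] = [set l].
Proof.
move=> kE lE; apply/setP => m; rewrite !inE.
case: (eqVneq m l) => [->|ml] /=; first by rewrite lE orbT.
by case: (eqVneq m k) => [->|mk] //=; rewrite (negbTE kE).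
Qed.

Lemma filt_kl E k l : k \in E -> l \in E -> [set m in [set k; l] | m \in E] = [set k; l].
Proof.
move=> kE lE; apply/setP => m; rewrite !inE.
case: (eqVneq m k) => [->|mk] /=; first by rewrite kE.
by case: (eqVneq m l) => [->|ml] //=.
Qed.

Lemma Loc S B0 (c : 'I_n -> int) : admissible S -> B0 \in F ->
  (forall k, k \in under S -> ev S k * ev B0 k = -1 ->
      active (proj_feas F (~: under S)) (under S) (restr (under S) B0) k) ->
  (forall k, k \in under S -> 0 < c k) ->
  (forall j k, j \in under S -> k \in under S -> (j < k)%nat -> c j <= c k) ->
  forall B, B \in F -> Lw (fun k => c k * ev S k) B <= Lw (fun k => c k * ev S k) B0.
Proof.
move=> aS B0F hact cpos cmon B BF.
have tB0 := hF hD B0F.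
rewrite leNgt; apply/negP => lt.
have [k [l [CF gt]]] := LP hD B0F (ex_intro2 _ _ B BF lt).
move: CF gt; rewrite pairset2.
wlog lk : k l / (l <= k)%nat.
  move=> hw; case: (leqP l k) => h; first exact: hw.
  by rewrite setUC; apply: hw; exact: ltnW.
move=> CF gt.
have rest := restr_in_proj (under S) CF.
rewrite restr_flip in rest.
have sneg : \sum_(m in [set k; l]) (c m * ev S m) * ev B0 m < 0.
  move: gt; rewrite Lw_flip //; move: (Lw _ B0) (\sum_(m in _) _) => a s; lia.
rewrite sum2 in sneg.
have tval m : m \notin under S -> (c m * ev S m) * ev B0 m = 0.
  by move=> mE; rewrite ev_out // mulr0 mul0r.
have tpos m : m \in under S -> ev S m * ev B0 m = 1 -> (c m * ev S m) * ev B0 m = c m.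
  by move=> mE p; rewrite -mulrA p mulr1.
have tneg m : m \in under S -> ev S m * ev B0 m = -1 -> (c m * ev S m) * ev B0 m = - c m.
  by move=> mE p; rewrite -mulrA p mulrN1.
case: (boolP (k \in under S)) => kE.
  case: (sign_in aS tB0 kE) => pk.
    have ck := cpos k kE; rewrite (tpos k kE pk) in sneg.
    case: (eqVneq k l) => [kl|kl] in sneg *; first by move: sneg ck; lia.
    case: (boolP (l \in under S)) => lE; last by move: sneg ck; rewrite tval //; lia.
    have cl := cpos l lE.
    case: (sign_in aS tB0 lE) => pl; first by move: sneg ck cl; rewrite tpos //; lia.
    have lk' : (l < k)%nat by rewrite ltn_neqAle eq_sym kl lk.
    have := cmon l k lE kE lk'; move: sneg; rewrite tneg //; lia.
  have /andP [ori fa] := hact k kE pk.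
  case: (eqVneq k l) => [kl|kl].
    by move: rest; rewrite -kl filt_kk // -pairset1 (negbTE ori).
  have lk' : (l < k)%nat by rewrite ltn_neqAle eq_sym kl lk.
  case: (boolP (l \in under S)) => lE.
    move: rest; rewrite filt_kl // -pairset2.
    by have := forallP fa l; rewrite lE /= => /implyP /(_ lk') /negbTE ->.
  by move: rest; rewrite filt_k1 // -pairset1 (negbTE ori).
rewrite (tval k kE) in sneg.
case: (eqVneq k l) => [kl|kl] in sneg *; first by move: sneg; lia.
case: (boolP (l \in under S)) => lE; last by move: sneg; rewrite tval //; lia.
case: (sign_in aS tB0 lE) => pl; first by have := cpos l lE; move: sneg; rewrite tpos //; lia.
have /andP [ori _] := hact l lE pl.
by move: rest; rewrite filt_l1 // -pairset1 (negbTE ori).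
Qed.
Lemma card_sumn K : #|K| = (\sum_k (k \in K : nat))%N.
Proof. by rewrite -sum1_card big_mkcond /=; apply: eq_bigr => k _; case: (k \in K). Qed.

Lemma card_adm X : admissible X -> #|X| = #|under X|.
Proof.
move=> /admP aX; rewrite cardX card_sumn; apply: eq_bigr => k _.
by rewrite in_under; have := aX k; case: ((k,true) \in X); case: ((k,false) \in X).
Qed.

Lemma adm_sub X Y : X \subset Y -> admissible Y -> admissible X.
Proof.
move=> /subsetP sXY /admP aY; apply/admP => k; apply: contra (aY k) => /andP [h1 h2].
by rewrite (sXY _ h1) (sXY _ h2).
Qed.

Lemma tr_adm B : tr B -> admissible B.
Proof. by move=> tB; apply/admP => k; rewrite tB; case: ((k,true) \in B). Qed.

Lemma under_restr E B : tr B -> under (restr E B) = E.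
Proof.
move=> tB; apply/setP => k; rewrite in_under !in_restr /= tB.
by case: (k \in E); case: ((k,true) \in B).
Qed.

Lemma ev_restr E X k : ev (restr E X) k = if k \in E then ev X k else 0.
Proof. by rewrite /ev !in_restr /=; case: (k \in E). Qed.

Lemma Lw_restr E X (w : 'I_n -> int) : (forall m, m \notin E -> w m = 0) -> Lw w (restr E X) = Lw w X.
Proof.
move=> w0; rewrite /Lw; apply: eq_bigr => m _; rewrite ev_restr.
by case: (boolP (m \in E)) => // mE; rewrite w0 // !mul0r.
Qed.

Lemma restr_sub E X : restr E X \subset X.
Proof. by apply/subsetP => a; rewrite in_restr => /andP []. Qed.

Lemma Lw_adm_le X Y : admissible X -> tr Y -> Lw (ev X) Y <= #|X|%:Z.
Proof.
move=> /admP aX tY; rewrite cardX natz_sum /Lw; apply: ler_sum => k _.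
rewrite [ev Y k]ev_tr // /ev; have := aX k.
by case: ((k,true) \in X); case: ((k,false) \in X); case: ((k,true) \in Y).
Qed.

Lemma Lw_adm_ge X Y : admissible X -> tr Y -> - (#|X|%:Z) <= Lw (ev X) Y.
Proof.
move=> /admP aX tY; rewrite cardX natz_sum /Lw -sumrN; apply: ler_sum => k _.
rewrite [ev Y k]ev_tr // /ev; have := aX k.
by case: ((k,true) \in X); case: ((k,false) \in X); case: ((k,true) \in Y).
Qed.

Lemma Lw_adm_eq X Y : admissible X -> tr Y -> X \subset Y -> Lw (ev X) Y = #|X|%:Z.
Proof.
move=> /admP aX tY /subsetP sXY; rewrite cardX natz_sum /Lw; apply: eq_bigr => k _.
have h1 : ((k,true) \in X) ==> ((k,true) \in Y) by apply/implyP/sXY.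
have h2 : ((k,false) \in X) ==> ((k,false) \in Y) by apply/implyP/sXY.
rewrite [ev Y k]ev_tr // /ev; have := aX k; move: h1 h2; rewrite tY.
by case: ((k,true) \in X); case: ((k,false) \in X); case: ((k,true) \in Y).
Qed.

Lemma Lw_adm_sub X Y : admissible X -> tr Y -> Lw (ev X) Y = #|X|%:Z -> X \subset Y.
Proof.
move=> /admP aX tY e.
have nn : forall k, true -> 0 <= ((((k,true) \in X) : nat)%:Z + (((k,false) \in X) : nat)%:Z) - ev X k * ev Y k.
  move=> k _; rewrite [ev Y k]ev_tr // /ev; have := aX k.
  by case: ((k,true) \in X); case: ((k,false) \in X); case: ((k,true) \in Y).
have s0 : \sum_(k | true) (((((k,true) \in X) : nat)%:Z + (((k,false) \in X) : nat)%:Z) - ev X k * ev Y k) = 0.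
  rewrite sumrB -/(Lw (ev X) Y) e cardX natz_sum.
  by rewrite (eq_bigr (fun k => (((k,true) \in X) : nat)%:Z + (((k,false) \in X) : nat)%:Z)) ?subrr.
have h0 := psumr_eq0P nn s0.
apply/subsetP => -[k b] kX; have := h0 k isT; move: kX; rewrite [ev Y k]ev_tr // /ev; have := aX k.
case: b; rewrite ?tY;
by case: ((k,true) \in X); case: ((k,false) \in X); case: ((k,true) \in Y).
Qed.
Lemma bigmax_val (T : finType) (P : pred T) (f : T -> int) x0 j : P j -> x0 <= f j ->
  (forall i, P i -> f i <= f j) -> \big[Num.max/x0]_(i | P i) f i = f j.
Proof.
move=> Pj x0j hj; apply/le_anti/andP; split; first exact: bigmax_le.
exact: (bigmax_sup j).
Qed.

Lemma bigmax_cases (T : finType) (P : pred T) (f : T -> int) x0 :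
  \big[Num.max/x0]_(i | P i) f i = x0 \/ exists2 i, P i & \big[Num.max/x0]_(i | P i) f i = f i.
Proof.
elim/big_ind: _ => [|x y hx hy|i Pi]; [by left| |by right; exists i].
by case: (leP x y) => _; [exact: hy|exact: hx].
Qed.

Lemma B0ex : exists B, B \in F.
Proof. by case: hD => /set0Pn [B BF] _ _; exists B. Qed.

Lemma indepP I : independent F I <-> admissible I /\ exists2 B, B \in F & I \subset B.
Proof.
split.
  move=> /andP [aI /eqP]; rewrite rankE => e; split => //.
  case: (bigmax_cases (fun B => B \in F) (fun B => Lw (ev I) B) (- (#|I|%:Z))) => [h|[B BF h]].
    have c0 : #|I| = 0%N by move: e; rewrite h; lia.
    have [B BF] := B0ex; exists B => //.
    by move/eqP: c0; rewrite cards_eq0 => /eqP ->; exact: sub0set.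
  exists B => //; apply: Lw_adm_sub => //; first exact: (hF hD BF).
  by rewrite -h.
move=> [aI [B BF sIB]]; apply/andP; split => //; apply/eqP; rewrite rankE.
have eB := Lw_adm_eq aI (hF hD BF) sIB.
rewrite (bigmax_val (j := B)) // eB; first lia.
by move=> C CF; apply: Lw_adm_le => //; exact: (hF hD CF).
Qed.
Definition B00 := odflt set0 [pick B in F].
Lemma B00F : B00 \in F.
Proof.
rewrite /B00; case: pickP => [B /= -> //|none] /=.
by have [B BF] := B0ex; rewrite none in BF.
Qed.

Definition c2 (k : 'I_n) : int := Posz (expn 2 k).
Definition wS S (k : 'I_n) : int := c2 k * ev S k.
Definition Bst S := Order.arg_max B00 (fun B => B \in F) (fun B => Lw (wS S) B).

Lemma BstP S : Bst S \in F /\ forall B, B \in F -> Lw (wS S) B <= Lw (wS S) (Bst S).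
Proof.
rewrite /Bst; case: (@arg_maxP _ _ _ B00 (fun B => B \in F) (fun B => Lw (wS S) B) B00F) => B BF h.
by split => // C CF; exact: h.
Qed.

Definition Iof S := restr (under S) (Bst S).
Definition Aof S := [set k in under S | ev S k * ev (Bst S) k == -1].
Definition flipS I (A : {set 'I_n}) : {set signed n} := [set a | if a.1 \in A then sbar a \in I else a \in I].
Definition actset I := [set i in under I | active (proj_feas F (~: under I)) (under I) I i].

Lemma filt_sub E K : K \subset E -> [set m in K | m \in E] = K.
Proof. by move=> /subsetP KE; apply/setP => m; rewrite !inE; case: (boolP (m \in K)) => // /KE ->. Qed.

Lemma c2pos k : 0 < c2 k.
Proof. by rewrite /c2 ltz_nat expn_gt0. Qed.

Lemma wS_out S m : m \notin under S -> wS S m = 0.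
Proof. by move=> mE; rewrite /wS ev_out // mulr0. Qed.

Lemma Aof_active S : admissible S -> forall k, k \in under S -> ev S k * ev (Bst S) k = -1 ->
  active (proj_feas F (~: under S)) (under S) (Iof S) k.
Proof.
move=> aS k kE pk; have [BsF Bmax] := BstP S; have tBs := hF hD BsF.
have key K : K \subset under S -> symd (Iof S) (flp K) \in proj_feas F (~: under S) ->
    0 <= \sum_(m in K) wS S m * ev (Bst S) m.
  move=> KE /imsetP [B BF e].
  have e2 : restr (under S) B = restr (under S) (symd (Bst S) (flp K)).
    by rewrite restr_flip filt_sub // -e.
  have := Bmax B BF.
  rewrite -(Lw_restr B (wS_out (S := S))) e2 Lw_restr; last exact: wS_out.
  rewrite Lw_flip //; move: (Lw _ (Bst S)) (\sum_(m in K) _) => a s; lia.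
apply/andP; split.
  rewrite /orientable pairset1; apply/negP => h.
  have := key [set k]; rewrite sub1set => /(_ kE h).
  by rewrite big_set1 /wS -mulrA pk mulrN1 oppr_ge0 leNgt c2pos.
apply/forallP => j; apply/implyP => /andP [jE jk0]; rewrite pairset2; apply/negP => h.
have jk : (j < k)%nat := jk0.
have := key [set k; j]; rewrite subUset !sub1set kE jE => /(_ isT h).
have kj : k != j by apply: contraTneq jk => ->; rewrite ltnn.
have cjk : c2 j < c2 k by rewrite /c2 ltz_nat ltn_exp2l.
rewrite sum2 (negbTE kj) /wS -!mulrA pk mulrN1.
have := c2pos j; case: (sign_in aS tBs jE) => ->; move: cjk; lia.
Qed.
Lemma tBst S : tr (Bst S).
Proof. by have [BsF _] := BstP S; exact: (hF hD BsF). Qed.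

Lemma under_Iof S : under (Iof S) = under S.
Proof. exact: under_restr (tBst S). Qed.

Lemma Iof_indep S : independent F (Iof S).
Proof.
apply/indepP; split; first exact: adm_sub (restr_sub _ _) (tr_adm (tBst S)).
by exists (Bst S); [case: (BstP S) | exact: restr_sub].
Qed.

Lemma Aof_sub S : admissible S -> Aof S \subset actset (Iof S).
Proof.
move=> aS; apply/subsetP => k; rewrite !inE => /andP [kE /eqP pk].
rewrite under_Iof kE /=; exact: Aof_active.
Qed.

Lemma flip_psi S : admissible S -> flipS (Iof S) (Aof S) = S.
Proof.
move=> /admP aS; apply/setP => -[k b]; rewrite !inE /= /Iof !negbK /sbar /=.
have tB := tBst S; rewrite [ev (Bst S) k]ev_tr // !in_under /ev; have := aS k.
case: b; rewrite ?tB;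
by case: ((k,true) \in S); case: ((k,false) \in S); case: ((k,true) \in Bst S).
Qed.

Lemma card_Iof S : admissible S -> #|Iof S| = #|S|.
Proof.
move=> aS; rewrite !card_adm ?under_Iof //.
exact: adm_sub (restr_sub _ _) (tr_adm (tBst S)).
Qed.

Lemma Lw_ext (w w' : 'I_n -> int) X : (forall k, w k = w' k) -> Lw w X = Lw w' X.
Proof. by move=> h; rewrite /Lw; apply: eq_bigr => k _; rewrite h. Qed.

Lemma rank_psi S : admissible S -> rankD F S = #|S|%:Z - 2 * #|Aof S|%:Z.
Proof.
move=> aS; have [BsF Bmax] := BstP S; have tB := tBst S.
have loc := Loc aS BsF (c := fun _ => 1) (fun k kE pk => Aof_active aS kE pk) (fun _ _ => ltr01) (fun _ _ _ _ _ => lexx 1).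
have val : Lw (ev S) (Bst S) = #|S|%:Z - 2 * #|Aof S|%:Z.
  rewrite card_adm // !card_sumn !natz_sum mulr_sumr -sumrB /Lw; apply: eq_bigr => k _.
  move/admP: aS => aS; rewrite !inE [ev (Bst S) k]ev_tr // in_under /ev; have := aS k.
  by case: ((k,true) \in S); case: ((k,false) \in S); case: ((k,true) \in Bst S).
rewrite rankE (bigmax_val (j := Bst S)) //.
  by apply: Lw_adm_ge.
move=> C CF; have := loc C CF; rewrite !(Lw_ext _ (w' := ev S)) // => k; exact: mul1r.
Qed.
Lemma under_flip I (A : {set 'I_n}) : under (flipS I A) = under I.
Proof.
apply/setP => k; rewrite !in_under !inE /= /sbar /=.
by case: (k \in A) => //; rewrite orbC.
Qed.

Lemma ev_flip I (A : {set 'I_n}) k : ev (flipS I A) k = if k \in A then - ev I k else ev I k.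
Proof. by rewrite /ev !inE /= /sbar /=; case: (k \in A) => //; rewrite opprB. Qed.

Lemma adm_flip I (A : {set 'I_n}) : admissible I -> admissible (flipS I A).
Proof.
move=> /admP aI; apply/admP => k; rewrite !inE /= /sbar /=.
by case: (k \in A) => //; rewrite andbC.
Qed.

Lemma restr_of_sub I B : admissible I -> tr B -> I \subset B -> restr (under I) B = I.
Proof.
move=> /admP aI tB /subsetP sIB; apply/setP => -[k b]; rewrite in_restr /= in_under.
have h1 : ((k,true) \in I) ==> ((k,true) \in B) by apply/implyP/sIB.
have h2 : ((k,false) \in I) ==> ((k,false) \in B) by apply/implyP/sIB.
move: h1 h2 (aI k); rewrite tB; case: b; rewrite ?tB;
by case: ((k,true) \in I); case: ((k,false) \in I); case: ((k,true) \in B).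
Qed.

Lemma restr_ev_eq E X Y : tr X -> tr Y -> (forall k, k \in E -> ev X k = ev Y k) -> restr E X = restr E Y.
Proof.
move=> tX tY h; apply/setP => -[k b]; rewrite !in_restr /=.
case: (boolP (k \in E)) => //= kE; rewrite (memb_ev k b tX tY) h // eqxx.
by case: ((k,b) \in X).
Qed.

Lemma psi_unique S I (A : {set 'I_n}) : admissible S -> independent F I -> A \subset actset I -> flipS I A = S ->
  Iof S = I /\ Aof S = A.
Proof.
move=> aS /indepP [aI [B0 B0F sIB0]] sA eS.
have tB0 := hF hD B0F.
have uS : under S = under I by rewrite -eS under_flip.
have IE : restr (under I) B0 = I by apply: restr_of_sub.
have AE : A \subset under I.
  by apply: (subset_trans sA); apply/subsetP => k; rewrite inE => /andP [].
have evIB k : k \in under I -> ev I k = ev B0 k by move=> kE; rewrite -IE ev_restr kE.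
have pS k : k \in under I -> ev S k * ev B0 k = if k \in A then -1 else 1.
  move=> kE; rewrite -eS ev_flip -(evIB k kE).
  have : ev I k * ev I k = 1.
    move/admP: aI => aI; move: kE; rewrite in_under /ev; have := aI k.
    by case: ((k,true) \in I); case: ((k,false) \in I).
  by move=> h; case: (k \in A); [rewrite mulNr h | exact: h].
have hact : forall k, k \in under S -> ev S k * ev B0 k = -1 ->
    active (proj_feas F (~: under S)) (under S) (restr (under S) B0) k.
  move=> k; rewrite uS IE => kE; rewrite pS //; case: ifP => // kA _.
  by have := subsetP sA k kA; rewrite inE => /andP [].
have cmon : forall j k, j \in under S -> k \in under S -> (j < k)%nat -> c2 j <= c2 k.
  by move=> j k _ _ jk; rewrite /c2 lez_nat leq_exp2l // ltnW.
have loc := Loc aS B0F hact (fun k _ => c2pos k) cmon.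
have [BsF Bmax] := BstP S.
have eqv : Lw (wS S) B0 = Lw (wS S) (Bst S).
  by apply/le_anti/andP; split; [exact: Bmax | exact: loc].
have tB := tBst S.
pose d k := ev S k * (ev B0 k - ev (Bst S) k).
have dvals k : d k = 0 \/ d k = 2 \/ d k = -2.
  move/admP: aS => aS'; rewrite /d [ev B0 k]ev_tr // [ev (Bst S) k]ev_tr // /ev; have := aS' k.
  by case: ((k,true) \in S); case: ((k,false) \in S); case: ((k,true) \in B0); case: ((k,true) \in Bst S) => //= _; (by left) || (by right; left) || (by right; right).
have dsum : \sum_(k < n) Posz (expn 2 k) * d k = 0.
  have eqd : \sum_(k < n) Posz (expn 2 k) * d k = Lw (wS S) B0 - Lw (wS S) (Bst S).
    by rewrite /Lw -sumrB; apply: eq_bigr => k _; rewrite /d /wS /c2; ring.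
  by rewrite eqd eqv subrr.
have d0 := bin0 dvals dsum.
have uniq k : k \in under I -> ev B0 k = ev (Bst S) k.
  move=> kE; have := d0 k; rewrite /d => /eqP; rewrite mulf_eq0 => /orP [/eqP x0|]; last by rewrite subr_eq0 => /eqP.
  by have := pS k kE; rewrite x0 mul0r; case: (k \in A).
split.
  rewrite /Iof uS; transitivity (restr (under I) B0); last exact: IE.
  by apply: restr_ev_eq => // k kE; rewrite uniq.
apply/setP => k; rewrite inE uS; case: (boolP (k \in under I)) => kE /=; last first.
  by apply/esym/negbTE; apply: contra kE; exact: (subsetP AE).
rewrite -uniq // pS //; by case: (k \in A).
Qed.
End Main.
Lemma binom_subsets (T : finType) (X : {set T}) (Rg : comNzRingType) (x : Rg) :
  (x + 1) ^+ #|X| = \sum_(A : {set T} | A \subset X) x ^+ #|A|.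
Proof.
rewrite -prodr_const big_mkcond /=.
rewrite (eq_bigr (fun i => (if i \in X then x else 0) + 1)); last by move=> i _; case: (i \in X); rewrite ?add0r.
rewrite (bigA_distr 1 +%R (fun i => if i \in X then x else 0) (fun _ => 1)) /=.
rewrite [RHS]big_mkcond /=; apply: eq_bigr => J _.
case: (boolP (J \subset X)) => sJX.
  rewrite -prodr_const [RHS]big_mkcond /=; apply: eq_bigr => i _.
  by case: (boolP (i \in J)) => // iJ; rewrite (subsetP sJX _ iJ).
have [i iJ iX] : exists2 i, i \in J & i \notin X.
  by move/subsetPn: sJX => [i iJ iX]; exists i.
by rewrite (bigD1 i) //= iJ (negbTE iX) mul0r.
Qed.
Theorem theorem3p8 (n : nat) (F : {set {set signed n}}) (hD : is_delta_matroid F)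
    (Rg : comNzRingType) (u v : Rg) :
  U_D F u (v - 1) =
  \sum_(I : {set signed n} | independent F I) u ^+ (n - #|I|) * v ^+ (activity F I).
Proof.
pose P (q : {set signed n} * {set 'I_n}) := independent F q.1 && (q.2 \subset actset F q.1).
transitivity (\sum_(q | P q) u ^+ (n - #|q.1|) * (v - 1) ^+ #|q.2|); last first.
  rewrite -(pair_big_dep (fun I => independent F I) (fun I (A : {set 'I_n}) => A \subset actset F I) (fun I (A : {set 'I_n}) => u ^+ (n - #|I|) * (v - 1) ^+ #|A|)) /=.
  apply: eq_bigr => I _; rewrite -mulr_sumr; congr (_ * _).
  by symmetry; rewrite -[in LHS](subrK 1 v); exact: binom_subsets.
rewrite /U_D (partition_big (fun q : {set signed n} * {set 'I_n} => flipS q.1 q.2) (fun S => admissible S)) /=; last first.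
  by move=> [I A] /andP [/(indepP hD) [aI _] _]; exact: adm_flip.
apply: eq_bigr => S aS.
rewrite (big_pred1 (Iof F S, Aof F S)) /=; last first.
  move=> [I A] /=; apply/idP/eqP.
    move=> /andP [/andP [iI sA] /eqP e]; have [h1 h2] := psi_unique hD aS iI sA e.
    by rewrite h1 h2.
  case=> -> ->; rewrite /P /= (Iof_indep hD) (Aof_sub hD) // (flip_psi hD) // eqxx.
  done.
rewrite card_Iof //; congr (_ * _); congr (_ ^+ _).
have -> : (#|S|%:Z - rankD F S) = Posz (2 * #|Aof F S|) by rewrite (rank_psi hD) // PoszM; ring.
by rewrite /= mulKn.
Qed.
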